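(* Let $(X,d^\star)$ be a $\star$-metric space and define $\tilde{d^\star}(x,y)=\min\{1,d^\star(x,y)\}$ for $x,y\in X$. Then $\tilde{d^\star}$ is a $\star$-metric on $X$ (for the same $t$-definer $\star$), and the topology induced by $\tilde{d^\star}$ on $X$ coincides with the topology induced by $d^\star$.
   Context: A $t$-definer is a function $\star:[0,\infty)\times[0,\infty)\to[0,\infty)$ such that for all $a,b,c\ge 0$: $a\star b=b\star a$; $a\star(b\star c)=(a\star b)\star c$; if $a\le b$ then $a\star c\le b\star c$; $a\star 0=a$; and $\star$ is continuous in its first variable with respect to the Euclidean topology. Given a nonempty set $X$ and a $t$-definer $\star$, a $\star$-metric on $X$ is a function $d:X\times X\to[0,\infty)$ such that for all $x,y,z\in X$: $d(x,y)=0$ iff $x=y$; $d(x,y)=d(y,x)$; and $d(x,y)\le d(x,z)\star d(z,y)$. The topology induced by a $\star$-metric $d$ consists of all $U\subseteq X$ such that for each $a\in U$ there is $r>0$ with $\{x\in X: d(a,x)<r\}\subseteq U$. *)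

(* Defs.v *)
From Stdlib Require Import Reals.
Open Scope R_scope.

(* A t-definer: an operation on [0,oo).  We represent it as a total function
   R -> R -> R; only its values on [0,oo) x [0,oo) matter, and it must map
   [0,oo) x [0,oo) into [0,oo). *)
Definition t_definer (star : R -> R -> R) : Prop :=
  (forall a b, 0 <= a -> 0 <= b -> 0 <= star a b) /\
  (forall a b, 0 <= a -> 0 <= b -> star a b = star b a) /\
  (forall a b c, 0 <= a -> 0 <= b -> 0 <= c ->
     star a (star b c) = star (star a b) c) /\
  (forall a b c, 0 <= a -> 0 <= b -> 0 <= c -> a <= b ->
     star a c <= star b c) /\
  (forall a, 0 <= a -> star a 0 = a) /\
  (forall a b, 0 <= a -> 0 <= b ->
     forall eps, 0 < eps -> exists delta, 0 < delta /\
       forall a', 0 <= a' -> Rabs (a' - a) < delta ->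
         Rabs (star a' b - star a b) < eps).

Definition star_metric {X : Type} (star : R -> R -> R) (d : X -> X -> R) : Prop :=
  (forall x y, 0 <= d x y) /\
  (forall x y, d x y = 0 <-> x = y) /\
  (forall x y, d x y = d y x) /\
  (forall x y z, d x y <= star (d x z) (d z y)).

Definition star_open {X : Type} (d : X -> X -> R) (U : X -> Prop) : Prop :=
  forall a, U a -> exists r, 0 < r /\ forall x, d a x < r -> U x.

Definition trunc_metric {X : Type} (d : X -> X -> R) : X -> X -> R :=
  fun x y => Rmin 1 (d x y).

(* Main.v *)
Require Import Defs.
From Stdlib Require Import Reals Lra.
Open Scope R_scope.

Theorem proposition3p8 (X : Type) (Hne : inhabited X)
  (star : R -> R -> R) (d : X -> X -> R) :
  t_definer star -> star_metric star d ->
  star_metric star (trunc_metric d) /\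
  (forall U : X -> Prop, star_open (trunc_metric d) U <-> star_open d U).
Proof.
  intros [Hnn [Hcom [Hass [Hmon [H0 Hcont]]]]] [Dnn [Dz [Ds Dt]]].
  unfold trunc_metric.
  assert (Hge1 : forall m, 0 <= m -> 1 <= star 1 m /\ 1 <= star m 1).
  { intros m Hm.
    assert (A : star 0 1 <= star m 1) by (apply Hmon; lra).
    rewrite Hcom in A by lra. rewrite H0 in A by lra.
    split; [rewrite Hcom by lra|]; lra. }
  split.
  - split; [|split; [|split]].
    + intros x y. unfold Rmin; destruct (Rle_dec 1 (d x y)); auto; lra.
    + intros x y. rewrite <- Dz. unfold Rmin; destruct (Rle_dec 1 (d x y)); lra.
    + intros x y. rewrite Ds. reflexivity.
    + intros x y z.
      pose proof (Dnn x z) as P1. pose proof (Dnn z y) as P2. pose proof (Dt x y z) as P3.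
      unfold Rmin at 2 3. idtac.
      destruct (Rle_dec 1 (d x z)).
      * pose proof (Rmin_l 1 (d x y)).
        destruct (Rle_dec 1 (d z y)).
        -- destruct (Hge1 1); lra.
        -- destruct (Hge1 (d z y)); lra.
      * destruct (Rle_dec 1 (d z y)).
        -- destruct (Hge1 _ P1). pose proof (Rmin_l 1 (d x y)). lra.
        -- pose proof (Rmin_r 1 (d x y)). lra.
  - intros U; split; intros HU a Ha; destruct (HU a Ha) as [r [Hr HUr]].
    + exists r; split; auto. intros x Hx. apply HUr.
      pose proof (Rmin_r 1 (d a x)). lra.
    + exists (Rmin r 1); split.
      * apply Rmin_pos; lra.
      * intros x Hx. apply HUr.
        pose proof (Rmin_l r 1). pose proof (Rmin_r r 1).
        revert Hx. unfold Rmin at 1. destruct (Rle_dec 1 (d a x)); lra.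
Qed.
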